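(* Let $V$ be an Archimedean linear lattice and let $(\mathcal{R}, S, V)$ be a $V$-complete vector $S$-metric space. Let $p, q, k:\mathcal{R}\to\mathcal{R}$ be maps satisfying: (i) for all $\xi,\gamma\in\mathcal{R}$, $$S(p\xi,p\xi,q\gamma)\preceq h_1 S(k\xi,k\xi,k\gamma)+h_2 S(p\xi,p\xi,k\xi)+h_3 S(q\gamma,q\gamma,k\gamma)+h_4 S(p\xi,p\xi,k\gamma)+h_5 S(q\gamma,q\gamma,k\xi),$$ where $h_1,\dots,h_5$ are positive real constants with $2h_1+2h_2+2h_3+4h_4+4h_5<1$; (ii) $p(\mathcal{R})\cup q(\mathcal{R})\subset k(\mathcal{R})$; (iii) one of $p(\mathcal{R})$, $q(\mathcal{R})$ or $k(\mathcal{R})$ is a $V$-complete subspace of $\mathcal{R}$. Then the pairs $\{p,k\}$ and $\{q,k\}$ have a unique point of coincidence in $\mathcal{R}$. If moreover $\{p,k\}$ and $\{q,k\}$ are weakly compatible, then $p$, $q$ and $k$ have a unique common fixed point in $\mathcal{R}$.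
   Context: An ordered linear space is a real vector space $V$ with a partial order $\preceq$ such that $x\preceq y$ implies $x+z\preceq y+z$ and $\omega x\preceq \omega y$ for all $z\in V$, $\omega>0$. A linear lattice (Riesz space) is an ordered linear space in which every two-element set has a supremum and an infimum. Write $V^+=\{x\in V: x\succeq 0\}$; for a sequence $\langle\mu_n\rangle$ in $V$, $\mu_n\downarrow 0$ means $\mu_n$ is decreasing with infimum $0$. $V$ is Archimedean if $\frac1n x\downarrow 0$ for every $x\in V^+$. A vector $S$-metric on a nonempty set $\mathcal{R}$ is a map $S:\mathcal{R}\times\mathcal{R}\times\mathcal{R}\to V$ such that for all $x,y,z,a\in\mathcal{R}$: (a) $S(x,y,z)\succeq 0$; (b) $S(x,y,z)=0$ iff $x=y=z$; (c) $S(x,y,z)\preceq S(x,x,a)+S(y,y,a)+S(z,z,a)$. Then $(\mathcal{R},S,V)$ is a vector $S$-metric space. A sequence $\langle x_n\rangle$ in $\mathcal{R}$ $V$-converges to $x\in\mathcal{R}$ if there is a sequence $\mu_n\downarrow 0$ in $V$ with $S(x_n,x_n,x)\preceq \mu_n$ for all $n$; it is $V$-Cauchy if there is $\mu_n\downarrow0$ in $V$ with $S(x_n,x_n,x_{n+q})\preceq\mu_n$ for all $n,q$. The space (or a subset) is $V$-complete if every $V$-Cauchy sequence in it $V$-converges to a limit in it. For maps $f,g:\mathcal{R}\to\mathcal{R}$, a point $x$ with $fx=gx=y$ is a coincidence point and $y$ is a point of coincidence of $f$ and $g$; $f,g$ are weakly compatible if $fgx=gfx$ whenever $fx=gx$.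 A common fixed point of several maps is a point fixed by all of them. *)

(* Defs.v *)
From mathcomp Require Import all_boot all_order all_algebra.
From mathcomp Require Import boolp classical_sets reals.
Set Implicit Arguments. Unset Strict Implicit. Unset Printing Implicit Defensive.
Import Order.TTheory GRing.Theory Num.Theory.
Local Open Scope ring_scope.
Local Open Scope classical_set_scope.

Section OrderedSpace.
Variables (R : realType) (V : lmodType R) (le : V -> V -> Prop).

Definition ordered_linear_space : Prop :=
  [/\ (forall x, le x x),
      (forall x y, le x y -> le y x -> x = y),
      (forall x y z, le x y -> le y z -> le x z),
      (forall x y z, le x y -> le (x + z) (y + z)) &
      (forall (w : R) x y, 0 < w -> le x y -> le (w *: x) (w *: y))].

Definition is_sup (A : set V) (s : V) : Prop :=
  (forall a, A a -> le a s) /\ (forall u, (forall a, A a -> le a u) -> le s u).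
Definition is_inf (A : set V) (i : V) : Prop :=
  (forall a, A a -> le i a) /\ (forall u, (forall a, A a -> le u a) -> le u i).

Definition linear_lattice : Prop :=
  ordered_linear_space /\
  (forall x y : V, (exists s, is_sup [set x; y] s) /\ (exists i, is_inf [set x; y] i)).

Definition decr_to0 (mu : nat -> V) : Prop :=
  (forall n, le (mu n.+1) (mu n)) /\ is_inf (range mu) 0.

Definition archimedean_space : Prop :=
  forall x, le 0 x -> decr_to0 (fun n => (n.+1%:R)^-1 *: x).

Variable X : Type.

Definition vector_S_metric (S : X -> X -> X -> V) : Prop :=
  [/\ (forall x y z, le 0 (S x y z)),
      (forall x y z, S x y z = 0 <-> (x = y /\ y = z)) &
      (forall x y z a, le (S x y z) (S x x a + S y y a + S z z a))].

Definition V_converges (S : X -> X -> X -> V) (x : nat -> X) (l : X) : Prop :=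
  exists mu, decr_to0 mu /\ forall n, le (S (x n) (x n) l) (mu n).

Definition V_Cauchy (S : X -> X -> X -> V) (x : nat -> X) : Prop :=
  exists mu, decr_to0 mu /\ forall n q, le (S (x n) (x n) (x (n + q)%N)) (mu n).

Definition V_complete_subset (S : X -> X -> X -> V) (A : set X) : Prop :=
  forall x : nat -> X, (forall n, A (x n)) -> V_Cauchy S x ->
    exists2 l, A l & V_converges S x l.

Definition V_complete (S : X -> X -> X -> V) : Prop :=
  V_complete_subset S setT.

End OrderedSpace.

Definition point_of_coincidence (X : Type) (f g : X -> X) (y : X) : Prop :=
  exists x, f x = y /\ g x = y.

Definition weakly_compatible (X : Type) (f g : X -> X) : Prop :=
  forall x, f x = g x -> f (g x) = g (f x).

(* Main.v *)
Require Import Defs.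
From mathcomp Require Import all_boot all_order all_algebra.
From mathcomp Require Import boolp classical_sets reals.
From mathcomp Require Import ring lra.
Import Order.TTheory GRing.Theory Num.Theory.
Local Open Scope ring_scope.
Local Open Scope classical_set_scope.
Set Implicit Arguments. Unset Strict Implicit.

Section Aux.
Variables (R : realType) (V : lmodType R) (le : V -> V -> Prop).
Hypothesis H : ordered_linear_space le.

Lemma le_refl' x : le x x. Proof. by case: H. Qed.
Lemma le_anti x y : le x y -> le y x -> x = y. Proof. case: H => _ A _ _ _; exact: A. Qed.
Lemma le_tr {y x z} : le x y -> le y z -> le x z. Proof. case: H => _ _ T _ _; exact: T. Qed.
Lemma leDr x y z : le x y -> le (x + z) (y + z). Proof. case: H => _ _ _ A _; exact: A. Qed.
Lemma leDl x y z : le x y -> le (z + x) (z + y).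
Proof. by rewrite ![z + _]addrC; apply: leDr. Qed.
Lemma leD a b c d : le a b -> le c d -> le (a + c) (b + d).
Proof. move=> h1 h2; apply: (@le_tr (b + c)); [exact: leDr|exact: leDl]. Qed.
Lemma le_subP x y : le x y <-> le 0 (y - x).
Proof.
split=> h.
  by rewrite -(subrr x); apply: leDr.
by have := @leDr _ _ x h; rewrite add0r subrK.
Qed.
Lemma le_subr {x y} : le 0 (y - x) -> le x y. Proof. exact: (proj2 (le_subP x y)). Qed.
Lemma le_subl {x y} : le x y -> le 0 (y - x). Proof. exact: (proj1 (le_subP x y)). Qed.
Lemma leZ {w : R} {x y} : 0 <= w -> le x y -> le (w *: x) (w *: y).
Proof.
rewrite le0r => /orP[/eqP->|w0] h; first by rewrite !scale0r; exact: le_refl'.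
by case: H => _ _ _ _ S; apply: S.
Qed.
Lemma leZ0 (w : R) x : 0 <= w -> le 0 x -> le 0 (w *: x).
Proof. by move=> w0 h; rewrite -(scaler0 _ w); apply: leZ. Qed.
Lemma leZl (a b : R) x : le 0 x -> a <= b -> le (a *: x) (b *: x).
Proof. by move=> h ab; apply: le_subr; rewrite -scalerBl; apply: leZ0; rewrite // subr_ge0. Qed.
Lemma le_addpos x a : le 0 a -> le x (x + a).
Proof. by move=> h; apply: le_subr; rewrite addrC addKr. Qed.

Lemma dec_mono {mu : nat -> V} : (forall n, le (mu n.+1) (mu n)) ->
  forall m n, (m <= n)%N -> le (mu n) (mu m).
Proof.
move=> hd m n /subnK <-; elim: (n - m)%N => [|i IH]; first exact: le_refl'.
by rewrite addSn; apply: le_tr (hd _) IH.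
Qed.

Lemma dec_ge0 {mu} : decr_to0 le mu -> forall n, le 0 (mu n).
Proof. by case=> _ [h _] n; apply: h; exists n. Qed.

Lemma dec_lb {mu u} : decr_to0 le mu -> (forall n, le u (mu n)) -> le u 0.
Proof. by case=> _ [_ h] hu; apply: h => _ [n _ <-]. Qed.

Lemma decD a b : decr_to0 le a -> decr_to0 le b -> decr_to0 le (fun n => a n + b n).
Proof.
move=> ha hb; split; first by move=> n; apply: leD; [case: ha|case: hb].
split; first by move=> _ [n _ <-]; rewrite -(addr0 0); apply: leD; apply: dec_ge0.
move=> u hu.
have hu' : forall n, le u (a n + b n) by move=> n; apply: hu; exists n.
apply: (dec_lb hb) => m.
have : le (u - b m) 0.
  apply: (dec_lb ha) => n.
  case: (leqP m n) => mn.
    apply: le_subr; rewrite opprB addrA; apply: le_subl.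
    apply: le_tr (hu' n) _; apply: leDl; exact: (dec_mono (proj1 hb)).
  apply: (@le_tr (a m)); last by apply: (dec_mono (proj1 ha)); exact: ltnW.
  apply: le_subr; rewrite opprB addrA; apply: le_subl; exact: hu'.
by move=> /le_subl; rewrite sub0r opprB => /le_subr.
Qed.

Lemma decZ (w : R) a : 0 < w -> decr_to0 le a -> decr_to0 le (fun n => w *: a n).
Proof.
move=> w0 ha; split; first by move=> n; apply: leZ; [exact: ltW| case: ha].
split; first by move=> _ [n _ <-]; apply: leZ0; [exact: ltW| exact: dec_ge0].
move=> u hu.
have : le (w^-1 *: u) 0.
  apply: (dec_lb ha) => n.
  have wi : 0 <= w^-1 by rewrite invr_ge0 ltW.
  have := leZ wi (hu _ (ex_intro2 _ _ n I erefl)).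
  by rewrite scalerA mulVf ?scale1r // gt_eqF.
move=> h; have := leZ (ltW w0) h; rewrite scalerA divff ?scale1r ?scaler0 //.
by rewrite gt_eqF.
Qed.

Lemma decsub mu f : decr_to0 le mu -> (forall n, f n <= f n.+1)%N ->
  (forall n, n <= f n)%N -> decr_to0 le (fun n => mu (f n)).
Proof.
move=> hm fi fn; split; first by move=> n; apply: (dec_mono (proj1 hm)).
split; first by move=> _ [n _ <-]; apply: dec_ge0.
move=> u hu; apply: (dec_lb hm) => n; apply: le_tr (hu _ (ex_intro2 _ _ n I erefl)) _.
exact: (dec_mono (proj1 hm)).
Qed.

Definition Neg (e : nat -> V) := exists mu, decr_to0 le mu /\ forall n, le (e n) (mu n).

Lemma NegD {e1 e2} : Neg e1 -> Neg e2 -> Neg (fun n => e1 n + e2 n).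
Proof.
move=> [m1 [d1 h1]] [m2 [d2 h2]]; exists (fun n => m1 n + m2 n); split.
  exact: decD. by move=> n; apply: leD.
Qed.

Lemma NegZ {w : R} {e} : 0 <= w -> Neg e -> Neg (fun n => w *: e n).
Proof.
move=> w0 [m [d h]]; exists (fun n => (w + 1) *: m n); split.
  by apply: decZ => //; apply: (le_lt_trans w0); rewrite ltrDl.
move=> n; apply: le_tr (leZ w0 (h n)) _; apply: leZl; first exact: dec_ge0.
by rewrite lerDl.
Qed.

Lemma Negle {e e'} : Neg e' -> (forall n, le (e n) (e' n)) -> Neg e.
Proof. by move=> [m [d h]] h'; exists m; split => // n; apply: le_tr (h n). Qed.

Lemma Negsub {e} f : Neg e -> (forall n, f n <= f n.+1)%N -> (forall n, n <= f n)%N ->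
  Neg (fun n => e (f n)).
Proof.
move=> [m [d h]] fi fn; exists (fun n => m (f n)); split => //; exact: decsub.
Qed.

Lemma Neg_const {v} : Neg (fun _ => v) -> le v 0.
Proof. by move=> [m [d h]]; apply: dec_lb d h. Qed.

Lemma absorb (b : R) D (e : nat -> V) : 0 <= b < 1 -> le 0 D ->
  (forall n, le D (b *: D + e n)) -> Neg e -> D = 0.
Proof.
move=> /andP[b0 b1] D0 hD hN; apply: le_anti => //.
have hb : 0 < 1 - b by rewrite subr_gt0.
have hbi : 0 <= (1 - b)^-1 by rewrite invr_ge0 ltW.
apply: (Neg_const (Negle (NegZ hbi hN) _)) => n.
have : le ((1 - b) *: D) (e n).
  rewrite scalerBl scale1r; apply: le_subr; rewrite opprB addrA.
  have := le_subl (hD n); by rewrite [_ + e n]addrC.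
move/(leZ hbi); rewrite scalerA mulVf ?scale1r //; by rewrite (gt_eqF hb).
Qed.

Lemma bernoulli (d : R) n : 0 <= d -> 1 + n%:R * d <= (1 + d) ^+ n.
Proof.
move=> d0; elim: n => [|n IH]; first by rewrite mul0r addr0 expr0.
rewrite exprSr -natr1.
have hn : 0 <= n%:R :> R by [].
have := exprn_ge0 n (addr_ge0 ler01 d0).
nra.
Qed.

Lemma pow_small (l eps : R) : 0 <= l < 1 -> 0 < eps -> exists n, l ^+ n <= eps.
Proof.
move=> /andP[l0 l1] e0.
have [->|lnz] := eqVneq l 0; first by exists 1%N; rewrite expr1 ltW.
have lp : 0 < l by rewrite lt0r lnz.
set d := l^-1 - 1.
have dp : 0 < d by rewrite subr_gt0 invf_gt1.
have x0 : 0 <= (eps * d)^-1 by rewrite invr_ge0 ltW // mulr_gt0.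
have := archi_boundP x0; set n := Num.bound _ => hn.
exists n.
have hB := @bernoulli d n (ltW dp).
have e1 : l * (1 + d) = 1 by rewrite /d addrC subrK mulfV.
have hp : l ^+ n * (1 + d) ^+ n = 1 by rewrite -exprMn e1 expr1n.
have h1 : 1 < eps * d * n%:R.
  by rewrite -ltr_pdivrMl ?mulr_gt0 // mulr1.
have Qp : 0 < (1 + d) ^+ n by rewrite exprn_gt0 // ltr_wpDr // ltW.
rewrite -(ler_pM2r Qp) hp.
have := ler_wpM2l (ltW e0) hB.
nra.
Qed.

Lemma geom (c l : R) a : archimedean_space le -> 0 <= c -> 0 <= l < 1 -> le 0 a ->
  decr_to0 le (fun n => (c * l ^+ n) *: a).
Proof.
move=> Ha c0 /andP[l0 l1] a0.
have lpow n : 0 <= l ^+ n by exact: exprn_ge0.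
split.
  move=> n; apply: leZl => //; rewrite exprS.
  apply: ler_wpM2l => //; have := lpow n; nra.
split; first by move=> _ [n _ <-]; apply: leZ0 => //; rewrite mulr_ge0.
move=> u hu.
apply: (dec_lb (Ha a a0)) => m.
have mp : 0 < (m.+1%:R : R)^-1 / (c + 1).
  by rewrite divr_gt0 // ?invr_gt0 // ltr_wpDl.
have [n hn] := @pow_small l _ (ltac:(by rewrite l0 l1)) mp.
apply: le_tr (hu _ (ex_intro2 _ _ n I erefl)) _.
apply: leZl => //.
have c1 : 0 < c + 1 by rewrite ltr_wpDl.
move: hn; rewrite ler_pdivlMr // => hn.
apply: le_trans hn; have := lpow n; nra.
Qed.

Lemma contr (a b lam : R) D E : 0 <= a -> 0 <= b -> a + b <= lam -> lam <= 1 -> b < 1 ->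
  le 0 D -> le E (a *: D + b *: E) -> le E (lam *: D).
Proof.
move=> a0 b0 ab l1 b1 D0 hE.
have hb : 0 < 1 - b by rewrite subr_gt0.
have hbi : 0 <= (1 - b)^-1 by rewrite invr_ge0 ltW.
have h : le ((1 - b) *: E) (a *: D).
  rewrite scalerBl scale1r; apply: le_subr; rewrite opprB addrA; exact: le_subl hE.
have h2 : le (a *: D) ((lam * (1 - b)) *: D) by apply: leZl => //; nra.
have := leZ hbi (le_tr h h2); rewrite !scalerA mulVf ?scale1r ?(gt_eqF hb) //.
by rewrite [lam * _]mulrC mulKf ?(gt_eqF hb).
Qed.

Lemma Neg0 : Neg (fun _ => 0).
Proof.
exists (fun _ => 0); split; last by move=> n; exact: le_refl'.
split; first by move=> n; exact: le_refl'.
split; first by move=> _ [n _ <-]; exact: le_refl'.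
by move=> u hu; apply: hu; exists 0%N.
Qed.

Lemma Sfix0 (c : R) v : 0 <= c < 1 -> le 0 v -> le v (c *: v) -> v = 0.
Proof.
move=> hc v0 hv; apply: (@absorb c v (fun _ => 0) hc v0 _ Neg0) => n; by rewrite addr0.
Qed.

Variables (X : Type) (S : X -> X -> X -> V).
Hypothesis HS : vector_S_metric le S.

Lemma S0 x y z : le 0 (S x y z). Proof. by case: HS => h _ _; exact: h. Qed.
Lemma Sxx x : S x x x = 0. Proof. by case: HS => _ h _; apply/h. Qed.
Lemma Seq x y : S x x y = 0 -> x = y. Proof. by case: HS => _ h _ /h []. Qed.
Lemma Ssym x y : S x x y = S y y x.
Proof.
have g : forall x y, le (S x x y) (S y y x).
  move=> a b; case: HS => _ _ h; have := h a a b a; by rewrite Sxx !add0r.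
by apply: le_anti; apply: g.
Qed.
Lemma Stri x y z : le (S x x z) (S x x y + S x x y + S y y z).
Proof. case: HS => _ _ h; have := h x x z y; by rewrite (Ssym z y). Qed.

Lemma Slim (y : nat -> X) l l' : Neg (fun n => S (y n) (y n) l) ->
  Neg (fun n => S (y n) (y n) l') -> l = l'.
Proof.
move=> h1 h2; apply: Seq; apply: le_anti; last exact: S0.
apply: Neg_const; refine (Negle (NegD (NegD h1 h1) h2) _) => n /=.
by have := Stri l (y n) l'; rewrite (Ssym l (y n)).
Qed.

End Aux.

Lemma comb1 (R : ringType) (V : lmodType R) (D E : V) (a1 a2 a3 a4 a5 : R) :
  a1 *: D + a2 *: E + a3 *: D + a4 *: (E + E + D) + a5 *: 0 =
  (a1 + a3 + a4) *: D + (a2 + a4 + a4) *: E.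
Proof.
rewrite scaler0 addr0 !scalerDr !scalerDl.
by rewrite !addrA [LHS](ACl ((1*3*6)*(2*4*5))) /= ?addrA.
Qed.

Lemma comb2 (R : ringType) (V : lmodType R) (D E : V) (a1 a2 a3 a4 a5 : R) :
  a1 *: D + a2 *: D + a3 *: E + a4 *: 0 + a5 *: (E + E + D) =
  (a1 + a2 + a5) *: D + (a3 + a5 + a5) *: E.
Proof.
rewrite scaler0 addr0 !scalerDr !scalerDl.
by rewrite !addrA [LHS](ACl ((1*2*6)*(3*4*5))) /= ?addrA.
Qed.

Lemma comb3 (R : ringType) (V : lmodType R) (A B C D : V) (h1 h2 h3 h4 h5 : R) :
  let T := h1 *: A + h2 *: D + h3 *: B + h4 *: (D + D + A) + h5 *: C in
  T + T + C = (h2 + h2 + h4 + h4 + h4 + h4) *: D +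
    ((h1 + h1 + h4 + h4) *: A + (h3 + h3) *: B + (h5 + h5 + 1) *: C).
Proof.
rewrite /= !scalerDr !scalerDl scale1r.
by rewrite !addrA [LHS](ACl (2*9*4*5*11*12*1*8*6*13*3*10*7*14*15)) /= ?addrA.
Qed.

Section SeqX.
Variables (X : Type) (x0 : X) (gp gq : X -> X).
Fixpoint seqx (n : nat) : X :=
  match n with 0 => x0 | n'.+1 => if odd n' then gq (seqx n') else gp (seqx n') end.
End SeqX.

Unset Implicit Arguments.

Theorem theorem3p1 (R : realType) (V : lmodType R) (le : V -> V -> Prop)
  (X : Type) (S : X -> X -> X -> V) (p q k : X -> X)
  (h1 h2 h3 h4 h5 : R) :
  inhabited X ->
  linear_lattice le -> archimedean_space le ->
  vector_S_metric le S -> V_complete le S ->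
  0 < h1 -> 0 < h2 -> 0 < h3 -> 0 < h4 -> 0 < h5 ->
  2 * h1 + 2 * h2 + 2 * h3 + 4 * h4 + 4 * h5 < 1 ->
  (forall xi ga : X,
     le (S (p xi) (p xi) (q ga))
        (h1 *: S (k xi) (k xi) (k ga) + h2 *: S (p xi) (p xi) (k xi)
         + h3 *: S (q ga) (q ga) (k ga) + h4 *: S (p xi) (p xi) (k ga)
         + h5 *: S (q ga) (q ga) (k xi))) ->
  (range p `|` range q `<=` range k) ->
  (V_complete_subset le S (range p) \/ V_complete_subset le S (range q)
   \/ V_complete_subset le S (range k)) ->
  (exists w : X,
     (point_of_coincidence p k w /\
      forall w', point_of_coincidence p k w' -> w' = w) /\
     (point_of_coincidence q k w /\
      forall w', point_of_coincidence q k w' -> w' = w)) /\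
  (weakly_compatible p k -> weakly_compatible q k ->
   exists! z : X, p z = z /\ q z = z /\ k z = z).
Proof.
move=> [x0] [Hols _] Harch HS Hcomp h1p h2p h3p h4p h5p hsum Hc Hrange Hcompl.
have Ssy := Ssym Hols HS.
have Str := Stri Hols HS.
have S0' := S0 HS.
have Sxx' := Sxx HS.
have Hkp : forall t, exists s, k s = p t.
  move=> t; have [s _ e] : range k (p t) by apply: Hrange; left; exists t.
  by exists s.
have Hkq : forall t, exists s, k s = q t.
  move=> t; have [s _ e] : range k (q t) by apply: Hrange; right; exists t.
  by exists s.
have [gp gpE] := choice Hkp.
have [gq gqE] := choice Hkq.
pose xs := seqx x0 gp gq.
pose y n := k (xs n.+1).
have yE n : y n = if odd n then q (xs n) else p (xs n).
  by rewrite /y /xs /=; case: (odd n).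
pose lam := h1 + h2 + h3 + 3 * h4 + 3 * h5.
have lam0 : 0 <= lam by rewrite /lam; lra.
have lam1 : lam < 1 by rewrite /lam; lra.
pose d n := S (y n) (y n) (y n.+1).
have step n : le (d n.+1) (lam *: d n).
  have k1 : k (xs n.+1) = y n := erefl.
  have k2 : k (xs n.+2) = y n.+1 := erefl.
  rewrite /d (Ssy (y n) (y n.+1)) (Ssy (y n.+1) (y n.+2)).
  case hn : (odd n).
  - have e1 : p (xs n.+1) = y n.+1 by rewrite yE /= hn.
    have e2 : q (xs n.+2) = y n.+2 by rewrite yE /= negbK hn.
    have := Hc (xs n.+1) (xs n.+2); rewrite e1 e2 k1 k2 Sxx' => hc.
    rewrite (Ssy (y n) (y n.+1)) (Ssy (y n.+1) (y n.+2)) in hc.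
    apply: (@contr _ _ _ Hols (h1 + h2 + h5) (h3 + h5 + h5)) => //; try (rewrite /lam; lra).
    rewrite -(comb2 _ _ h1 h2 h3 h4 h5); apply: (le_tr Hols hc); apply: (leD Hols); first exact: (le_refl' Hols _).
    apply: (leZ Hols); first exact: ltW.
    exact: Str.
  - have e1 : q (xs n.+1) = y n.+1 by rewrite yE /= hn.
    have e2 : p (xs n.+2) = y n.+2 by rewrite yE /= negbK hn.
    have := Hc (xs n.+2) (xs n.+1); rewrite e1 e2 k1 k2 Sxx' => hc.
    apply: (@contr _ _ _ Hols (h1 + h3 + h4) (h2 + h4 + h4)) => //; try (rewrite /lam; lra).
    rewrite -(comb1 _ _ h1 h2 h3 h4 h5); apply: (le_tr Hols hc).
    apply: (leD Hols); last exact: (le_refl' Hols _).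
    apply: (leD Hols); first exact: (le_refl' Hols _).
    apply: (leZ Hols); first exact: ltW.
    exact: Str.
have Dn n : le (d n) ((lam ^+ n) *: d 0%N).
  elim: n => [|n IH]; first by rewrite expr0 scale1r; exact: (le_refl' Hols _).
  apply: (le_tr Hols (step n)); rewrite exprS -scalerA.
  exact: (leZ Hols lam0 IH).
have lam1' : 1 - lam != 0 by rewrite subr_eq0 eq_sym lt_eqF.
pose c := 2 / (1 - lam).
have c0 : 0 <= c by rewrite /c divr_ge0 // subr_ge0 ltW.
have Cb m n : le (S (y n) (y n) (y (n + m)%N)) ((c * lam ^+ n) *: d 0%N).
  elim: m n => [|m IH] n.
    rewrite addn0 Sxx'; apply: (leZ0 Hols); last exact: S0'.
    by rewrite mulr_ge0 // exprn_ge0.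
  apply: (le_tr Hols (Str (y n) (y n.+1) (y (n + m.+1)%N))).
  rewrite -addSnnS.
  apply: (le_tr Hols (leD Hols (leD Hols (Dn n) (Dn n)) (IH n.+1))).
  rewrite -!scalerDl.
  have -> : lam ^+ n + lam ^+ n + c * lam ^+ n.+1 = c * lam ^+ n.
    rewrite /c exprS; field => //.
  exact: (le_refl' Hols _).
pose mu n := (c * lam ^+ n) *: d 0%N.
have Hmu : decr_to0 le mu.
  by apply: (geom Hols Harch c0); [rewrite lam0 lam1 | exact: S0'].
have cauchy_f : forall f : nat -> nat, (forall n, f n <= f n.+1)%N ->
    (forall n, n <= f n)%N -> (forall n q, exists r, f (n + q)%N = (f n + r)%N) ->
    V_Cauchy le S (fun n => y (f n)).
  move=> f f1 f2 f3; exists (fun n => mu (f n)); split; first exact: (decsub Hols).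
  by move=> n q'; have [r ->] := f3 n q'; exact: Cb.
have [z0 _ Hz0] := Hcomp y (fun _ => I)
  (cauchy_f id (fun n => leqnSn n) (fun n => leqnn n) (fun n q => ex_intro _ q erefl)).
have Nz0 : Neg le (fun n => S (y n) (y n) z0) := Hz0.
have inA : forall (A : set X) (f : nat -> nat), V_complete_subset le S A ->
    (forall n, A (y (f n))) -> (forall n, f n <= f n.+1)%N ->
    (forall n, n <= f n)%N -> (forall n q, exists r, f (n + q)%N = (f n + r)%N) -> A z0.
  move=> A f hA hfA f1 f2 f3.
  have [l Al Hl] := hA _ hfA (cauchy_f f f1 f2 f3).
  suff <- : l = z0 by [].
  have N1 : Neg le (fun n => S (y (f n)) (y (f n)) z0) := Negsub Hols Nz0 f1 f2.
  have N2 : Neg le (fun n => S (y (f n)) (y (f n)) l) := Hl.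
  exact: (Slim Hols HS N2 N1).
have d1 n : (n <= n.*2)%N by rewrite -addnn leq_addr.
have d2 n : (n.*2 <= n.+1.*2)%N by rewrite leq_double.
have d3 n : (n <= n.*2.+1)%N by rewrite ltnW // ltnS d1.
have d4 n : (n.*2.+1 <= n.+1.*2.+1)%N by rewrite ltnS leq_double.
have d5 n q' : exists r, ((n + q').*2 = n.*2 + r)%N by exists q'.*2; rewrite doubleD.
have d6 n q' : exists r, ((n + q').*2.+1 = n.*2.+1 + r)%N by exists q'.*2; rewrite doubleD addSn.
have zk : range k z0.
  case: Hcompl => [hP | [hQ | hK]].
  - apply: Hrange; left; apply: (inA _ (fun n => n.*2) hP) => //.
    by move=> n; exists (xs n.*2) => //; rewrite yE odd_double.
  - apply: Hrange; right; apply: (inA _ (fun n => n.*2.+1) hQ) => //.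
    by move=> n; exists (xs n.*2.+1) => //; rewrite yE /= odd_double.
  - apply: (inA _ id hK) => //; try (by move=> n; exists (xs n.+1)).
    by move=> n q'; exists q'.
have [u _ ku] := zk.
have Nd : Neg le d.
  exists mu; split => // n; have := Cb 1%N n; by rewrite addn1.
have NA : Neg le (fun n => S (y n.*2) (y n.*2) z0) := Negsub Hols Nz0 d2 d1.
have NB : Neg le (fun n => d n.*2) := Negsub Hols Nd d2 d1.
have NC : Neg le (fun n => S (y n.*2.+1) (y n.*2.+1) z0) := Negsub Hols Nz0 d4 d3.
have w1 : 0 <= h1 + h1 + h4 + h4 by lra.
have w2 : 0 <= h3 + h3 by lra.
have w3 : 0 <= h5 + h5 + 1 by lra.
pose e n := (h1 + h1 + h4 + h4) *: S (y n.*2) (y n.*2) z0 + (h3 + h3) *: d n.*2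
  + (h5 + h5 + 1) *: S (y n.*2.+1) (y n.*2.+1) z0.
have Ne : Neg le e := NegD Hols (NegD Hols (NegZ Hols w1 NA) (NegZ Hols w2 NB)) (NegZ Hols w3 NC).
pose b := h2 + h2 + h4 + h4 + h4 + h4.
have hb : 0 <= b < 1 by apply/andP; split; rewrite /b; lra.
have pu : p u = z0.
  apply: (Seq HS); apply: (@absorb _ _ _ Hols b _ e hb (S0' _ _ _) _ Ne) => n.
  have kx : k (xs n.*2.+1) = y n.*2 := erefl.
  have qx : q (xs n.*2.+1) = y n.*2.+1 by rewrite yE /= odd_double.
  have := Hc u (xs n.*2.+1); rewrite qx kx ku => hc.
  rewrite (Ssy z0 (y n.*2)) (Ssy (y n.*2.+1) (y n.*2)) in hc.
  apply: (le_tr Hols (Str (p u) (y n.*2.+1) z0)).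
  rewrite /b /e -(comb3 (S (y n.*2) (y n.*2) z0) (d n.*2) (S (y n.*2.+1) (y n.*2.+1) z0)
     (S (p u) (p u) z0) h1 h2 h3 h4 h5) /=.
  have hT := le_tr Hols hc (leD Hols (leD Hols (le_refl' Hols _) (leZ Hols (ltW h4p)
     (Str (p u) z0 (y n.*2)))) (le_refl' Hols _)).
  rewrite (Ssy z0 (y n.*2)) in hT.
  apply: (leD Hols); last exact: (le_refl' Hols _).
  exact: (leD Hols hT hT).
have qu : q u = z0.
  apply: (Seq HS); apply: (@Sfix0 _ _ _ Hols (h3 + h5) _ _ (S0' _ _ _)).
    by apply/andP; split; lra.
  have := Hc u u; rewrite pu ku !Sxx' !scaler0 !add0r addr0 (Ssy z0 (q u)) -scalerDl.
  by [].
have uniqP : forall w', point_of_coincidence p k w' -> w' = z0.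
  move=> w' [u' [pu' ku']].
  apply: (Seq HS); apply: (@Sfix0 _ _ _ Hols (h1 + h4 + h5) _ _ (S0' _ _ _)).
    by apply/andP; split; lra.
  have := Hc u' u; rewrite pu' ku' ku qu !Sxx' !scaler0 !addr0 (Ssy z0 w') -!scalerDl.
  by [].
have uniqQ : forall w', point_of_coincidence q k w' -> w' = z0.
  move=> w' [v [qv kv]].
  apply: esym; apply: (Seq HS); apply: (@Sfix0 _ _ _ Hols (h1 + h4 + h5) _ _ (S0' _ _ _)).
    by apply/andP; split; lra.
  have := Hc u v; rewrite pu ku qv kv !Sxx' !scaler0 !addr0 (Ssy w' z0) -!scalerDl.
  by [].
split.
  by exists z0; split; split => //; exists u.
move=> wp wq.
have := wp u (etrans pu (esym ku)); rewrite ku pu => pz.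
have pz0 : p z0 = z0 by apply: uniqP; exists z0; split => //; rewrite pz.
have kz0 : k z0 = z0 by rewrite -pz pz0.
have := wq u (etrans qu (esym ku)); rewrite ku qu => qz.
exists z0; split; first by split => //; split => //; rewrite qz kz0.
by move=> t [pt [qt kt]]; apply: esym; apply: uniqP; exists t.
Qed.
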